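(* Consider the optimization problem over user association $\mathbf{x}=(x_{ij})$, resource allocation $\mathbf{y}=(y_{ij})$ and power $\mathbf{p}=(p_i)$, $i\in\mathcal I=\{1,\dots,I\}$, $j\in\mathcal J=\{1,\dots,J\}$: \[ \max_{\mathbf x,\mathbf y,\mathbf p}\ \sum_{j\in\mathcal J}\omega_j\log_2\Big(KB\sum_{i\in\mathcal I}y_{ij}\log_2(1+\eta_{ij})\Big) \] subject to $\eta_{ij}=\dfrac{p_i g_{ij}}{\sum_{k\in\mathcal I\setminus\{i\}}d_k p_k g_{kj}+\sigma^2}$ for all $i,j$; $\sum_{i\in\mathcal I}x_{ij}=1$ for all $j$; $d_i=\sum_{j\in\mathcal J}y_{ij}$ for all $i$; $0\le p_i\le P_i$ for all $i$; $0\le d_i\le 1$ for all $i$; $0\le y_{ij}\le x_{ij}$ and $x_{ij}\in\{0,1\}$ for all $i,j$. Then at an optimal solution $(\mathbf x^*,\mathbf y^*,\mathbf p^* )$ the load of every BS is binary: $d_i^*=\sum_{j\in\mathcal J}y^*_{ij}\in\{0,1\}$ for all $i\in\mathcal I$; i.e., each BS operates either at full load ($d_i^*=1$) or at zero load ($d_i^*=0$).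
   Context: Downlink heterogeneous network with $I$ base stations (BSs) and $J$ users. $x_{ij}\in\{0,1\}$ indicates that user $j$ is associated with BS $i$; $y_{ij}$ is the fraction of time-frequency resource blocks BS $i$ allocates to user $j$; $d_i$ is the load of BS $i$; $p_i$ is the per-resource-block transmit power of BS $i$ with maximum $P_i>0$. The constants $K>0$, $B>0$, channel gains $g_{ij}>0$, noise power $\sigma^2>0$ and user priorities $\omega_j>0$ are given. $\eta_{ij}$ is the (load-coupled) average SINR of user $j$ served by BS $i$. *)

(* Defs.v *)
From mathcomp Require Import all_boot all_order all_algebra.
From mathcomp Require Import all_classical all_reals all_analysis.
Set Implicit Arguments. Unset Strict Implicit. Unset Printing Implicit Defensive.
Import Order.TTheory GRing.Theory Num.Theory.
Local Open Scope ring_scope.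

Section HetNet.
Variables (R : realType) (nI nJ : nat).

Definition log2 (x : R) : R := ln x / ln 2.

Definition load (y : 'I_nI -> 'I_nJ -> R) (i : 'I_nI) : R := \sum_(j < nJ) y i j.

Definition sinr (g : 'I_nI -> 'I_nJ -> R) (sigma2 : R)
  (y : 'I_nI -> 'I_nJ -> R) (p : 'I_nI -> R) (i : 'I_nI) (j : 'I_nJ) : R :=
  p i * g i j / (\sum_(k < nI | k != i) load y k * p k * g k j + sigma2).

Definition rate (K B : R) (g : 'I_nI -> 'I_nJ -> R) (sigma2 : R)
  (y : 'I_nI -> 'I_nJ -> R) (p : 'I_nI -> R) (j : 'I_nJ) : R :=
  K * B * \sum_(i < nI) y i j * log2 (1 + sinr g sigma2 y p i j).

(* objective sum_j omega_j log2 (rate_j)  (only meaningful when all rates > 0) *)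
Definition utility (K B : R) (g : 'I_nI -> 'I_nJ -> R) (sigma2 : R)
  (omega : 'I_nJ -> R) (y : 'I_nI -> 'I_nJ -> R) (p : 'I_nI -> R) : R :=
  \sum_(j < nJ) omega j * log2 (rate K B g sigma2 y p j).

Definition feasible (Pmax : 'I_nI -> R) (x : 'I_nI -> 'I_nJ -> bool)
  (y : 'I_nI -> 'I_nJ -> R) (p : 'I_nI -> R) : Prop :=
  [/\ (forall j, \sum_(i < nI) (x i j)%:R = 1 :> R),
      (forall i, 0 <= p i <= Pmax i),
      (forall i, 0 <= load y i <= 1) &
      (forall i j, 0 <= y i j <= (x i j)%:R)].

(* optimality, with the convention log2 0 = -infinity: an optimal solution
   has finite objective (all rates positive), and its objective dominates
   every feasible point with finite objective (feasible points with some
   zero rate have objective -infinity). *)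
Definition optimal (K B : R) (g : 'I_nI -> 'I_nJ -> R) (sigma2 : R)
  (omega : 'I_nJ -> R) (Pmax : 'I_nI -> R) (x : 'I_nI -> 'I_nJ -> bool)
  (y : 'I_nI -> 'I_nJ -> R) (p : 'I_nI -> R) : Prop :=
  [/\ feasible Pmax x y p,
      (forall j, 0 < rate K B g sigma2 y p j) &
      (forall x' y' p', feasible Pmax x' y' p' ->
         (forall j, 0 < rate K B g sigma2 y' p' j) ->
         utility K B g sigma2 omega y' p' <= utility K B g sigma2 omega y p)].

End HetNet.

(* Main.v *)
Require Import Defs.
From mathcomp Require Import all_boot all_order all_algebra.
From mathcomp Require Import all_classical all_reals all_analysis.
From mathcomp Require Import ring lra.
Import Order.TTheory GRing.Theory Num.Theory.
Local Open Scope ring_scope.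

Section A.
Variable R : realType.

Lemma ln_lt_sub1 (x : R) : 0 < x -> x != 1 -> ln x < x - 1.
Proof.
move=> x0 x1.
set s := Num.sqrt x.
have s0 : 0 < s by rewrite sqrtr_gt0.
have xs : x = s * s by rewrite -expr2 sqr_sqrtr // ltW.
have s1 : s != 1 by apply: contra x1 => /eqP e; rewrite xs e mulr1.
have hl : ln s <= s - 1.
  have h := @le_ln1Dx R (s - 1).
  have e : 1 + (s - 1) = s by lra.
  by rewrite e in h; apply: h; lra.
have hq : 0 < (s - 1) ^+ 2.
  by rewrite exprn_even_gt0 //= subr_eq0.
rewrite xs lnM ?posrE //.
nra.
Qed.

Lemma key_ineq (d c : R) : 0 < d -> d < 1 -> 0 < c ->
  d * ln (1 + c) < ln (1 + d * c).
Proof.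
move=> d0 d1 c0.
set a := 1 + d * c.
have a0 : 0 < a by rewrite /a; nra.
set r := (1 + c) / a.
have ra : 1 + c = a * r by rewrite /r mulrC divfK // gt_eqF.
have r1 : r != 1.
  apply/eqP => e; move: ra; rewrite e mulr1 /a => h; nra.
have r0 : 0 < r by rewrite /r divr_gt0 //; lra.
have hr := ln_lt_sub1 r r0 r1.
have ha : 1 - a^-1 <= ln a.
  have h := @le_ln1Dx R (a^-1 - 1).
  have e : 1 + (a^-1 - 1) = a^-1 by lra.
  rewrite e lnV ?posrE // in h.
  have : - ln a <= a^-1 - 1 by apply: h; have := invr_gt0 a; rewrite a0; lra.
  lra.
rewrite ra lnM ?posrE //.
have e1 : r - 1 = (1 - d) * c / a.
  by rewrite /r /a; field; rewrite -/a gt_eqF.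
have e2 : 1 - a^-1 = d * c / a.
  by rewrite /a; field; rewrite -/a gt_eqF.
have : d * (r - 1) = (1 - d) * (1 - a^-1) by rewrite e1 e2; field; rewrite gt_eqF.
nra.
Qed.


Lemma sum_lt_one (n : nat) (F G : 'I_n -> R) (i0 : 'I_n) :
  (forall i, F i <= G i) -> F i0 < G i0 -> \sum_(i < n) F i < \sum_(i < n) G i.
Proof.
move=> hle hlt.
rewrite (bigD1 i0) //= [X in _ < X](bigD1 i0) //=.
by apply: ltr_leD => //; apply: ler_sum => i _.
Qed.

Lemma log2_gt (a b : R) : 0 < a -> a < b -> log2 a < log2 b.
Proof.
move=> a0 ab; rewrite /log2 ltr_pM2r ?invr_gt0 ?ln_gt0 ?ltr1n //.
by rewrite ltr_ln ?posrE // (lt_trans a0).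
Qed.

Lemma log2_ge (a b : R) : 0 < a -> a <= b -> log2 a <= log2 b.
Proof.
move=> a0 ab; rewrite /log2 ler_pM2r ?invr_gt0 ?ln_gt0 ?ltr1n //.
by rewrite ler_ln ?posrE // (lt_le_trans a0).
Qed.

Lemma term_le (D yv s : R) : 0 < D -> D < 1 -> 0 <= yv -> 0 <= s ->
  yv * log2 (1 + s) <= yv / D * log2 (1 + D * s).
Proof.
move=> D0 D1 y0 s0.
case: (eqVneq s 0) => [->|sn0].
  by rewrite mulr0 addr0 /log2 ln1 !mul0r !mulr0.
have sp : 0 < s by rewrite lt0r sn0.
have k := key_ineq D s D0 D1 sp.
have l2 : 0 < (ln 2 : R)^-1 by rewrite invr_gt0 ln_gt0 ?ltr1n.
set q := yv / D.
have q0 : 0 <= q by rewrite divr_ge0 // ltW.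
have yq : yv = q * D by rewrite /q divfK // gt_eqF.
rewrite yq /log2.
have qt : 0 <= q * (ln 2)^-1 by rewrite mulr_ge0 // ltW.
nra.
Qed.

Lemma term_lt (D yv s : R) : 0 < D -> D < 1 -> 0 < yv -> 0 < s ->
  yv * log2 (1 + s) < yv / D * log2 (1 + D * s).
Proof.
move=> D0 D1 y0 sp.
have k := key_ineq D s D0 D1 sp.
have l2 : 0 < (ln 2 : R)^-1 by rewrite invr_gt0 ln_gt0 ?ltr1n.
set q := yv / D.
have q0 : 0 < q by rewrite divr_gt0.
have yq : yv = q * D by rewrite /q divfK // gt_eqF.
rewrite yq /log2.
have qt : 0 < q * (ln 2)^-1 by rewrite mulr_gt0.
nra.
Qed.

End A.

Theorem theorem2 (R : realType) (nI nJ : nat) (K B sigma2 : R)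
  (g : 'I_nI -> 'I_nJ -> R) (omega : 'I_nJ -> R) (Pmax : 'I_nI -> R)
  (hK : 0 < K) (hB : 0 < B) (hg : forall i j, 0 < g i j) (hs : 0 < sigma2)
  (homega : forall j, 0 < omega j) (hP : forall i, 0 < Pmax i)
  (x : 'I_nI -> 'I_nJ -> bool) (y : 'I_nI -> 'I_nJ -> R) (p : 'I_nI -> R) :
  optimal K B g sigma2 omega Pmax x y p ->
  forall i : 'I_nI, load y i = 0 \/ load y i = 1.
Proof.
move=> [[hx hp hl hy] hrate hopt] i0.
have [hl0 hl1] := andP (hl i0).
set D := load y i0.
case: (eqVneq D 0) => [->|D0]; first by left.
case: (eqVneq D 1) => [->|D1]; first by right.
exfalso.
have Dp : 0 < D by rewrite lt0r D0.
have Dl : D < 1 by rewrite lt_neqAle D1.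
have y0 : forall k j, 0 <= y k j by move=> k j; case/andP: (hy k j).
have [j0 hj0] : exists j, 0 < y i0 j.
  case: (pickP (fun j => 0 < y i0 j)) => [j0 h|hn]; first by exists j0.
  suff : D = 0 by move/eqP; rewrite (negbTE D0).
  rewrite /D /load big1 // => j _.
  by apply/eqP; rewrite eq_le y0 andbT leNgt hn.
have xi0 : x i0 j0.
  case/andP: (hy i0 j0) => _; case: (x i0 j0) => //= h.
  by move: (lt_le_trans hj0 h); rewrite ltxx.
have yo : forall k, k != i0 -> y k j0 = 0.
  move=> k kn; have := hx j0; rewrite (bigD1 i0) //= xi0 => h.
  have hs0 : \sum_(i < nI | i != i0) (x i j0)%:R = 0 :> R.
    by move: h; rewrite -[X in _ = X]addr0 => /addrI.
  have := psumr_eq0P (fun i _ => ler0n _ (x i j0)) hs0 kn.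
  case/andP: (hy k j0) => h1 h2 hx0; rewrite hx0 in h2.
  by apply/eqP; rewrite eq_le h1 h2.
have pos_den : forall (yy : 'I_nI -> 'I_nJ -> R) (pp : 'I_nI -> R) k j,
    (forall l, 0 <= load yy l) -> (forall l, 0 <= pp l) ->
    0 < \sum_(l < nI | l != k) load yy l * pp l * g l j + sigma2.
  move=> yy pp k j h1 h2; apply: ltr_wpDl => //; apply: sumr_ge0 => l _.
  by rewrite !mulr_ge0 // ltW.
have pge : forall k, 0 <= p k by move=> k; case/andP: (hp k).
have lge : forall k, 0 <= load y k by move=> k; case/andP: (hl k).
have sge : forall k j, 0 <= sinr g sigma2 y p k j.
  move=> k j; rewrite /sinr divr_ge0 ?mulr_ge0 ?(ltW (hg _ _)) //.
  exact: ltW (pos_den _ _ _ _ lge pge).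
have pi0 : 0 < p i0.
  rewrite lt0r pge andbT; apply/eqP => pz.
  have := hrate j0; rewrite /rate big1 ?mulr0 ?ltxx // => k _.
  case: (eqVneq k i0) => [->|kn]; last by rewrite yo // mul0r.
  by rewrite /sinr pz !mul0r addr0 /log2 ln1 mul0r mulr0.
pose y' := fun k j => if k == i0 then y k j / D else y k j.
pose p' := fun k => if k == i0 then D * p k else p k.
have hload' : forall k, load y' k = if k == i0 then 1 else load y k.
  move=> k; rewrite /load /y'; case: eqP => [->|_] //.
  by rewrite -mulr_suml divff.
have hlp : forall k, load y' k * p' k = load y k * p k.
  move=> k; rewrite hload' /p'; case: eqVneq => [->|_] //.
  by rewrite mul1r.
have hI : forall k j, \sum_(l < nI | l != k) load y' l * p' l * g l j + sigma2
     = \sum_(l < nI | l != k) load y l * p l * g l j + sigma2.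
  by move=> k j; congr (_ + _); apply: eq_bigr => l _; rewrite hlp.
have hterm : forall k j, y k j * log2 (1 + sinr g sigma2 y p k j)
    <= y' k j * log2 (1 + sinr g sigma2 y' p' k j).
  move=> k j; rewrite /y'; case: eqVneq => [->|kn].
    have -> : sinr g sigma2 y' p' i0 j = D * sinr g sigma2 y p i0 j.
      by rewrite /sinr hI /p' eqxx !mulrA.
    exact: term_le.
  by rewrite /sinr hI /p' (negbTE kn).
have hterm0 : y i0 j0 * log2 (1 + sinr g sigma2 y p i0 j0)
    < y' i0 j0 * log2 (1 + sinr g sigma2 y' p' i0 j0).
  rewrite /y' eqxx.
  have -> : sinr g sigma2 y' p' i0 j0 = D * sinr g sigma2 y p i0 j0.
    by rewrite /sinr hI /p' eqxx !mulrA.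
  apply: term_lt => //.
  rewrite /sinr divr_gt0 ?mulr_gt0 //.
  exact: (pos_den _ _ _ _ lge pge).
have KB : 0 < K * B by rewrite mulr_gt0.
have hr : forall j, rate K B g sigma2 y p j <= rate K B g sigma2 y' p' j.
  move=> j; rewrite /rate ler_pM2l //; apply: ler_sum => k _; exact: hterm.
have hr0 : rate K B g sigma2 y p j0 < rate K B g sigma2 y' p' j0.
  rewrite /rate ltr_pM2l //; exact: (@sum_lt_one _ _ _ _ _ (fun k => hterm k j0) hterm0).
have feas : feasible Pmax x y' p'.
  split => //.
  - move=> k; rewrite /p'; case: eqP => _ //.
    case/andP: (hp k) => h1 h2; apply/andP; split.
      by rewrite mulr_ge0 // ltW.
    by apply: le_trans h2; rewrite ler_piMl // ltW.
  - by move=> k; rewrite hload'; case: eqP => _ //; rewrite ler01 lexx.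
  - move=> k j; rewrite /y'; case: eqP => [->|_] //.
    rewrite divr_ge0 ?(ltW Dp) //=.
    case/andP: (hy i0 j) => h1; case: (x i0 j) => h2.
      rewrite ler_pdivrMr // mul1r /D /load (bigD1 j) //= lerDl.
      by apply: sumr_ge0 => l _.
    have -> : y i0 j = 0 by apply/eqP; rewrite eq_le h1 h2.
    by rewrite mul0r.
have := hopt x y' p' feas (fun j => lt_le_trans (hrate j) (hr j)).
apply/negP; rewrite -ltNge /utility.
apply: (@sum_lt_one _ _ _ _ j0).
  move=> j; rewrite ler_pM2l //; exact: log2_ge.
by rewrite ltr_pM2l //; exact: log2_gt.
Qed.
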